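(* Let $f:[a,b]\to\mathbb{C}$ be continuous and write $f=g+ih$ with $g,h:[a,b]\to\mathbb{R}$ its real and imaginary parts. If $h$ is Lipschitz on $[a,b]$, then $$\dim_H(G(g+ih))=\dim_H(G(g+h))=\dim_H(G((g,h)))=\dim_H(G(g)),$$ $$\overline{\dim}_B(G(g+ih))=\overline{\dim}_B(G(g+h))=\overline{\dim}_B(G((g,h)))=\overline{\dim}_B(G(g)),$$ $$\dim_P(G(g+ih))=\dim_P(G(g+h))=\dim_P(G((g,h)))=\dim_P(G(g)).$$
   Context: For a function $u$ on $[a,b]$, $G(u)=\{(x,u(x)):x\in[a,b]\}$ denotes its graph. The graph of the complex-valued $g+ih$ is a subset of $\mathbb{R}\times\mathbb{C}\cong\mathbb{R}^3$, the graph of the vector-valued $(g,h):[a,b]\to\mathbb{R}^2$ is a subset of $\mathbb{R}^3$, and graphs of real-valued functions $g$, $g+h$ are subsets of $\mathbb{R}^2$, all with Euclidean metrics. $\dim_H$, $\overline{\dim}_B$, $\dim_P$ denote Hausdorff, upper box and packing dimension. *)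

(* Defs.v *)
From HB Require Import structures.
From mathcomp Require Import all_boot all_order all_algebra.
From mathcomp Require Import all_classical all_reals all_analysis.
Set Implicit Arguments. Unset Strict Implicit. Unset Printing Implicit Defensive.
Import Order.TTheory GRing.Theory Num.Theory.
Local Open Scope classical_set_scope.
Local Open Scope ring_scope.

Section FractalDims.
Variables (R : realType) (n : nat).

Definition edist (x y : 'I_n -> R) : R :=
  Num.sqrt (\sum_(i < n) (x i - y i) ^+ 2).

(* Diameter (with diam set0 = 0). *)
Definition diam (A : set ('I_n -> R)) : \bar R :=
  ereal_sup ([set 0%E] `|` [set r | exists x y, A x /\ A y /\ r = (edist x y)%:E]).

(* |U|^s, with the convention that empty sets contribute 0. *)
Definition hterm (s : R) (U : set ('I_n -> R)) : \bar R :=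
  if pselect (U = set0) then 0%E else poweR (diam U) s.

Definition Hcontent (s delta : R) (A : set ('I_n -> R)) : \bar R :=
  ereal_inf [set (\sum_(0 <= i <oo) hterm s (U i))%E |
     U in [set U : nat -> set ('I_n -> R) |
       A `<=` \bigcup_i U i /\ forall i, (diam (U i) <= delta%:E)%E]].

(* Hausdorff s-dimensional measure H^s = lim_{delta -> 0} H^s_delta
   (= sup over delta > 0, since H^s_delta is nonincreasing in delta). *)
Definition Hmeasure (s : R) (A : set ('I_n -> R)) : \bar R :=
  ereal_sup [set Hcontent s d A | d in [set d : R | 0 < d]].

Definition hausdorff_dim (A : set ('I_n -> R)) : \bar R :=
  ereal_inf [set s%:E | s in [set s : R | 0 <= s /\ Hmeasure s A = 0%E]].

(* N_delta(A): least number of sets of diameter at most delta covering A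
   (+oo if there is no finite such cover). *)
Definition covnum (delta : R) (A : set ('I_n -> R)) : \bar R :=
  ereal_inf [set (k%:R)%:E | k in [set k : nat |
     exists U : nat -> set ('I_n -> R),
       A `<=` \bigcup_(i in [set i | (i < k)%N]) U i /\
       forall i, (i < k)%N -> (diam (U i) <= delta%:E)%E]].

Definition box_ratio (delta : R) (A : set ('I_n -> R)) : \bar R :=
  match covnum delta A with
  | r%:E => (ln r / (- ln delta))%:E
  | _ => +oo%E
  end.

(* Upper box dimension: limsup_{delta -> 0+} log N_delta(A) / (- log delta). *)
Definition upper_box_dim (A : set ('I_n -> R)) : \bar R :=
  ereal_inf [set ereal_sup [set box_ratio d A | d in [set d : R | 0 < d < e]]
            | e in [set e : R | 0 < e < 1]].

Definition cball (c : 'I_n -> R) (r : R) : set ('I_n -> R) :=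
  [set y | edist c y <= r].

Definition is_packing (delta : R) (A : set ('I_n -> R)) (J : set nat)
    (c : nat -> 'I_n -> R) (r : nat -> R) : Prop :=
  (forall i, J i -> A (c i) /\ 0 < r i <= delta) /\
  (forall i j, J i -> J j -> i <> j -> cball (c i) (r i) `&` cball (c j) (r j) = set0).

(* P^s_delta(A) = sup sum |B_i|^s over delta-packings (|B_i| = 2 r_i). *)
Definition Pdelta (s delta : R) (A : set ('I_n -> R)) : \bar R :=
  ereal_sup [set v | exists (J : set nat) (c : nat -> 'I_n -> R) (r : nat -> R),
    is_packing delta A J c r /\ v = (\esum_(i in J) (powR (2 * r i) s)%:E)%E].

(* P^s_0 = lim_{delta -> 0} P^s_delta (= inf over delta > 0). *)
Definition P0 (s : R) (A : set ('I_n -> R)) : \bar R :=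
  ereal_inf [set Pdelta s d A | d in [set d : R | 0 < d]].

Definition Pmeasure (s : R) (A : set ('I_n -> R)) : \bar R :=
  ereal_inf [set (\sum_(0 <= i <oo) P0 s (B i))%E |
     B in [set B : nat -> set ('I_n -> R) | A `<=` \bigcup_i B i]].

Definition packing_dim (A : set ('I_n -> R)) : \bar R :=
  ereal_inf [set s%:E | s in [set s : R | 0 <= s /\ Pmeasure s A = 0%E]].

End FractalDims.

Section Graphs.
Variable R : realType.

Definition pt2 (x y : R) : 'I_2 -> R := fun i => if val i == 0%N then x else y.
Definition pt3 (x y z : R) : 'I_3 -> R :=
  fun i => match val i with 0%N => x | 1%N => y | _ => z end.

Definition graph2 (a b : R) (u : R -> R) : set ('I_2 -> R) :=
  [set pt2 x (u x) | x in `[a, b]].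

Definition graph_vec (a b : R) (g h : R -> R) : set ('I_3 -> R) :=
  [set pt3 x (g x) (h x) | x in `[a, b]].

(* G(g + i h) subset of R x C, identified with R^3 via
   (x, z) |-> (x, Re z, Im z), an isometry for the Euclidean metrics. *)
Definition graph_cplx (a b : R) (g h : R -> R) : set ('I_3 -> R) :=
  [set pt3 x (g x) (h x) | x in `[a, b]].

End Graphs.

(* Main.v *)
Require Import Defs.
From HB Require Import structures.
From mathcomp Require Import all_boot all_order all_algebra.
From mathcomp Require Import all_classical all_reals all_analysis.
From mathcomp Require Import ring lra.
Set Implicit Arguments. Unset Strict Implicit. Unset Printing Implicit Defensive.
Import Order.TTheory GRing.Theory Num.Theory numFieldNormedType.Exports.
Local Open Scope classical_set_scope.
Local Open Scope ring_scope.

Section Edist.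
Variables (R : realType) (n : nat).
Implicit Types x y z : 'I_n -> R.

Lemma edist_ge0 x y : 0 <= Defs.edist x y. Proof. exact: sqrtr_ge0. Qed.

Lemma edist_sym x y : Defs.edist x y = Defs.edist y x.
Proof.
rewrite /Defs.edist; congr Num.sqrt; apply: eq_bigr => i _.
by rewrite -sqrrN opprB.
Qed.

Lemma edistxx x : Defs.edist x x = 0.
Proof. by rewrite /Defs.edist big1 ?sqrtr0 // => i _; rewrite subrr expr2 mulr0. Qed.

Lemma coord_le_edist x y i : `|x i - y i| <= Defs.edist x y.
Proof.
rewrite /Defs.edist -sqrtr_sqr ler_sqrt; last by apply: sumr_ge0 => j _; exact: sqr_ge0.
rewrite (bigD1 i) //= lerDl; apply: sumr_ge0 => j _; exact: sqr_ge0.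
Qed.

Lemma sumsq_le (I : Type) (s : seq I) (F : I -> R) : (forall i, 0 <= F i) ->
  \sum_(i <- s) F i ^+ 2 <= (\sum_(i <- s) F i) ^+ 2.
Proof.
move=> F0; elim: s => [|a s IH]; first by rewrite !big_nil expr2 mulr0.
rewrite !big_cons.
have S0 : 0 <= \sum_(i <- s) F i by apply: sumr_ge0.
have := F0 a; nra.
Qed.

Lemma edist_le_sum x y : Defs.edist x y <= \sum_i `|x i - y i|.
Proof.
have S0 : 0 <= \sum_i `|x i - y i| by apply: sumr_ge0.
rewrite /Defs.edist -(ger0_norm S0) -sqrtr_sqr ler_sqrt; last exact: sqr_ge0.
have H := @sumsq_le _ (index_enum 'I_n) (fun i => `|x i - y i|) (fun i => normr_ge0 _).
apply: le_trans H.
by rewrite le_eqVlt; apply/orP; left; apply/eqP; apply: eq_bigr => i _; rewrite real_normK // num_real.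
Qed.

Lemma edist_wtri x y z : Defs.edist x y <= n%:R * (Defs.edist x z + Defs.edist z y).
Proof.
apply: (le_trans (edist_le_sum x y)).
apply: le_trans (_ : \sum_(i < n) (Defs.edist x z + Defs.edist z y) <= _); last first.
  by rewrite sumr_const card_ord mulr_natl.
apply: ler_sum => i _.
rewrite (_ : x i - y i = (x i - z i) + (z i - y i)); last by rewrite addrA subrK.
apply: le_trans (ler_normD _ _) _.
by apply: lerD; apply: coord_le_edist.
Qed.
End Edist.

Section Diam.
Variables (R : realType) (n : nat).
Local Open Scope ereal_scope.

Lemma diam_ge0 (U : set ('I_n -> R)) : 0 <= Defs.diam U.
Proof. by apply: ereal_sup_ubound; left. Qed.

Lemma edist_le_diam (U : set ('I_n -> R)) x y : U x -> U y ->
  (Defs.edist x y)%:E <= Defs.diam U.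
Proof. by move=> Ux Uy; apply: ereal_sup_ubound; right; exists x, y. Qed.

Lemma diam_le (U : set ('I_n -> R)) (M : \bar R) : 0 <= M ->
  (forall x y, U x -> U y -> (Defs.edist x y)%:E <= M) -> Defs.diam U <= M.
Proof.
move=> M0 H; apply: ge_ereal_sup => z [->|[x [y [Ux [Uy ->]]]]] //.
exact: H.
Qed.

Lemma diam_fin (U : set ('I_n -> R)) (d : R) : Defs.diam U <= d%:E ->
  exists2 du : R, Defs.diam U = du%:E & (0 <= du)%R.
Proof.
move=> H; have := diam_ge0 U; move: H.
case E: (Defs.diam U) => [r||] //.
by move=> _ r0; exists r.
Qed.

Lemma hterm_ge0 (s : R) (U : set ('I_n -> R)) : 0 <= Defs.hterm s U.
Proof. rewrite /Defs.hterm; destruct (pselect (U = set0)) => //; exact: poweR_ge0. Qed.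

End Diam.

Section Transfer.
Variables (R : realType) (n m : nat) (phi : ('I_n -> R) -> ('I_m -> R)).
Variables (A : set ('I_n -> R)) (L : R).
Hypothesis L1 : (1 <= L)%R.
Hypothesis Lip : forall x y, A x -> A y ->
  (Defs.edist (phi x) (phi y) <= L * Defs.edist x y)%R.

Let L0 : (0 < L)%R. Proof. by apply: lt_le_trans L1. Qed.

Local Open Scope ereal_scope.

Lemma diam_img (U : set ('I_n -> R)) :
  Defs.diam (phi @` (U `&` A)) <= L%:E * Defs.diam U.
Proof.
apply: diam_le; first by apply: mule_ge0; [rewrite lee_fin ltW | exact: diam_ge0].
move=> _ _ [x [Ux Ax] <-] [y [Uy Ay] <-].
apply: (@le_trans _ _ (L * Defs.edist x y)%:E); first by rewrite lee_fin Lip.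
rewrite EFinM; apply: lee_wpmul2l; first by rewrite lee_fin ltW.
exact: edist_le_diam.
Qed.

Lemma hterm_img (s d : R) (U : set ('I_n -> R)) : (0 <= s)%R ->
  Defs.diam U <= d%:E ->
  Defs.hterm s (phi @` (U `&` A)) <= (L `^ s)%:E * Defs.hterm s U.
Proof.
move=> s0 dU; rewrite {1}/Defs.hterm.
destruct (pselect (phi @` (U `&` A) = set0)) as [V0e|V0]; first by apply: mule_ge0; [rewrite lee_fin powR_ge0|exact: hterm_ge0].
rewrite /Defs.hterm; destruct (pselect (U = set0)) as [U0|U0n].
  by exfalso; apply: V0; rewrite U0 set0I image_set0.
have [du Edu du0] := diam_fin dU.
have dV := diam_img U; rewrite Edu in dV.
have [dv Edv dv0] := diam_fin dV.
rewrite Edu Edv /= -EFinM lee_fin -powRM ?(ltW L0) //.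
apply: ge0_ler_powR => //; rewrite ?nnegrE ?mulr_ge0 ?(ltW L0) //.
by rewrite -lee_fin EFinM -Edv.
Qed.

Lemma Hcontent_ge0 (k : nat) (s d : R) (X : set ('I_k -> R)) : 0 <= Defs.Hcontent s d X.
Proof.
apply: le_ereal_inf_tmp => _ [U _ <-].
by apply: nneseries_ge0 => i _ _; exact: hterm_ge0.
Qed.

Lemma Hcontent_img (s d : R) : (0 <= s)%R -> (0 < d)%R ->
  Defs.Hcontent s (d / L) A = 0 -> Defs.Hcontent s d (phi @` A) = 0.
Proof.
move=> s0 d0 H0; apply/eqP; rewrite eq_le Hcontent_ge0 andbT.
apply/lee_addgt0Pr => e e0; rewrite add0e.
have c0 : (0 < L `^ s)%R by apply: powR_gt0.
have : Defs.Hcontent s (d / L) A < (e / L `^ s)%:E by rewrite H0 lte_fin divr_gt0.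
move=> /ereal_inf_lt [_ [U [cov dU] <-] ylt].
apply: ge_ereal_inf; exists (\sum_(0 <= i <oo) Defs.hterm s (phi @` (U i `&` A))).
  exists (fun i => phi @` (U i `&` A)) => //; split.
    move=> _ [x Ax <-]; have [i _ Uix] := cov x Ax.
    by exists i => //; exists x.
  move=> i; apply: (le_trans (diam_img (U i))).
  have -> : d = (L * (d / L))%R by rewrite mulrC divfK ?gt_eqF.
  rewrite EFinM.
  by apply: lee_wpmul2l; [rewrite lee_fin ltW|exact: dU].
apply: (@le_trans _ _ (\sum_(0 <= i <oo) ((L `^ s)%:E * Defs.hterm s (U i)))).
  apply: lee_nneseries => [i _ _|i _]; first exact: hterm_ge0.
  exact: (hterm_img (d := d / L)).
rewrite nneseriesZl; last by move=> i _; exact: hterm_ge0.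
apply: (@le_trans _ _ ((L `^ s)%:E * (e / L `^ s)%:E)).
  by apply: lee_wpmul2l; [rewrite lee_fin ltW | exact: ltW].
by rewrite -EFinM mulrC divfK ?gt_eqF.
Qed.

Lemma Hmeasure_img (s : R) : (0 <= s)%R ->
  Defs.Hmeasure s A = 0 -> Defs.Hmeasure s (phi @` A) = 0.
Proof.
move=> s0 H0; apply/eqP; rewrite eq_le; apply/andP; split; last first.
  apply: le_trans (Hcontent_ge0 s 1 (phi @` A)) _.
  by apply: ereal_sup_ubound; exists 1%R => //=.
apply: ge_ereal_sup => _ [d d0 <-]; rewrite le_eqVlt; apply/orP; left; apply/eqP.
apply: Hcontent_img => //.
apply/eqP; rewrite eq_le Hcontent_ge0 andbT -H0.
by apply: ereal_sup_ubound; exists (d / L)%R => //=; rewrite divr_gt0.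
Qed.

Lemma hdim_img : Defs.hausdorff_dim (phi @` A) <= Defs.hausdorff_dim A.
Proof.
apply: ereal_inf_le_tmp => _ [s [s0 Hs] <-]; exists s => //; split => //.
exact: Hmeasure_img.
Qed.

End Transfer.

Lemma esumZ_nat (R : realType) (J : set nat) (c : R) (f : nat -> \bar R) :
  (0 <= c)%R -> (forall i, (0 <= f i)%E) ->
  (\esum_(i in J) (c%:E * f i) = c%:E * \esum_(i in J) f i)%E.
Proof.
move=> c0 f0.
have -> : J = [set x | (fun i => `[< J i >]) x].
  by apply/funext => x /=; rewrite asboolE.
rewrite -!nneseries_esum //; last by move=> k _; apply: mule_ge0.
by rewrite nneseriesZl.
Qed.

Section PTransfer.
Variables (R : realType) (n m : nat) (phi : ('I_n -> R) -> ('I_m -> R)).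
Variables (A : set ('I_n -> R)) (L : R).
Hypothesis L1 : (1 <= L)%R.
Hypothesis Lip : forall x y, A x -> A y ->
  (Defs.edist (phi x) (phi y) <= L * Defs.edist x y)%R.

Let L0 : (0 < L)%R. Proof. by apply: lt_le_trans L1. Qed.

Let K : R := (2 * (n%:R + 1) * L)%R.
Let K0 : (0 < K)%R.
Proof. by rewrite /K !mulr_gt0 // ltr_wpDl. Qed.

Local Open Scope ereal_scope.

Lemma Pdelta_ge0 (k : nat) (s d : R) (X : set ('I_k -> R)) : 0 <= Defs.Pdelta s d X.
Proof.
apply: ereal_sup_ubound; exists set0, (fun _ _ => 0%R), (fun _ => 0%R).
by split; [split|rewrite esum_set0].
Qed.

Lemma P0_ge0 (k : nat) (s : R) (X : set ('I_k -> R)) : 0 <= Defs.P0 s X.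
Proof. by apply: le_ereal_inf_tmp => _ [d _ <-]; exact: Pdelta_ge0. Qed.

Lemma Pmeasure_ge0 (k : nat) (s : R) (X : set ('I_k -> R)) : 0 <= Defs.Pmeasure s X.
Proof.
apply: le_ereal_inf_tmp => _ [B _ <-].
by apply: nneseries_ge0 => i _ _; exact: P0_ge0.
Qed.

Lemma Pdelta_img (s d : R) (B : set ('I_n -> R)) : (0 <= s)%R ->
  Defs.Pdelta s (d * K) (phi @` (B `&` A)) <= (K `^ s)%:E * Defs.Pdelta s d B.
Proof.
move=> s0; apply: ge_ereal_sup => _ [J [c [r [[Hc Hdisj] ->]]]].
have [c' Hc'] : {c' : nat -> 'I_n -> R &
    forall i, J i -> (B (c' i) /\ A (c' i)) /\ phi (c' i) = c i}.
  apply: (@choice _ _ (fun i y => J i -> (B y /\ A y) /\ phi y = c i)) => i.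
  have [Ji|nJi] := pselect (J i); last by exists (fun _ => 0%R).
  by have [[x [Bx Ax] Ex] _] := Hc i Ji; exists x.
have rK i : J i -> (0 < r i / K <= d)%R.
  move=> Ji; have [_ /andP[r0 rd]] := Hc i Ji.
  by rewrite divr_gt0 // ler_pdivrMr.
have Hpack : Defs.is_packing d B J c' (fun i => r i / K)%R.
  split; first by move=> i Ji; split; [exact: (Hc' i Ji).1.1 | exact: rK].
  move=> i j Ji Jj ij; apply/seteqP; split => [z [z1 z2]|//].
  rewrite /Defs.cball /= in z1 z2.
  have [_ /andP[ri0 _]] := Hc i Ji; have [_ /andP[rj0 _]] := Hc j Jj.
  have [[_ Ai] Ei] := Hc' i Ji; have [[_ Aj] Ej] := Hc' j Jj.
  have D1 := edist_wtri (c' i) (c' j) z.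
  have E1 := Lip Ai Aj; rewrite Ei Ej in E1.
  rewrite edist_sym in z2.
  have N0 : (0 <= n%:R :> R)%R by [].
  have key : (2 * Defs.edist (c i) (c j) <= r i + r j)%R.
    have e1 : (Defs.edist (c' i) z * K <= r i)%R by rewrite -ler_pdivlMr.
    have e2 : (Defs.edist z (c' j) * K <= r j)%R by rewrite -ler_pdivlMr.
    have hn : (0 < n%:R + 1 :> R)%R by rewrite ltr_wpDl.
    have a0 := edist_ge0 (c' i) z; have b0 := edist_ge0 z (c' j).
    have D0 := edist_ge0 (c' i) (c' j).
    have h1 : (Defs.edist (c i) (c j) * (2 * (n%:R + 1)) <=
               L * Defs.edist (c' i) (c' j) * (2 * (n%:R + 1)))%R.
      by rewrite ler_wpM2r // mulr_ge0 // ltW.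
    have h2 : (Defs.edist (c' i) (c' j) * K <=
       n%:R * (Defs.edist (c' i) z + Defs.edist z (c' j)) * K)%R.
      by rewrite ler_wpM2r // ltW.
    have h3 : (n%:R * (Defs.edist (c' i) z * K) <= n%:R * r i)%R by rewrite ler_wpM2l.
    have h4 : (n%:R * (Defs.edist z (c' j) * K) <= n%:R * r j)%R by rewrite ler_wpM2l.
    have key2 : (2 * Defs.edist (c i) (c j) * (n%:R + 1) <= (r i + r j) * (n%:R + 1))%R.
      rewrite /K in h2 h3 h4; lra.
    by rewrite ler_pM2r in key2.
  have hij := Hdisj i j Ji Jj ij.
  have [ri_le|rj_lt] := leP (r i) (r j).
  - have : (cball (c i) (r i) `&` cball (c j) (r j)) (c i).
      split; rewrite /Defs.cball /=; first by rewrite edistxx ltW.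
      by rewrite edist_sym; lra.
    by rewrite hij.
  - have : (cball (c i) (r i) `&` cball (c j) (r j)) (c j).
      split; rewrite /Defs.cball /=; last by rewrite edistxx ltW.
      by lra.
    by rewrite hij.
apply: (@le_trans _ _ ((K `^ s)%:E * \esum_(i in J) ((powR (2 * (r i / K)) s)%:E))).
  rewrite -esumZ_nat ?powR_ge0 // => [|i]; last by rewrite lee_fin powR_ge0.
  apply: le_esum => i Ji; rewrite -EFinM lee_fin -powRM ?(ltW K0) //; last first.
    by have [_ /andP[r0 _]] := Hc i Ji; rewrite mulr_ge0 // divr_ge0 // ltW.
  have -> : (K * (2 * (r i / K)) = 2 * r i)%R by field; rewrite gt_eqF.
  by [].
apply: lee_wpmul2l; first by rewrite lee_fin powR_ge0.
apply: ereal_sup_ubound; exists J, c', (fun i => r i / K)%R; split => //.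
Qed.

Lemma P0_img (s : R) (B : set ('I_n -> R)) : (0 <= s)%R ->
  Defs.P0 s (phi @` (B `&` A)) <= (K `^ s)%:E * Defs.P0 s B.
Proof.
move=> s0; have c0 : (0 < K `^ s)%R by apply: powR_gt0.
rewrite -[X in X%:E * _](invrK (K `^ s)%R) lee_pdivlMl ?invr_gt0 //.
apply: le_ereal_inf_tmp => _ [d d0 <-].
rewrite lee_pdivrMl //.
apply: le_trans (Pdelta_img d B s0).
by apply: ereal_inf_lbound; exists (d * K)%R => //=; rewrite mulr_gt0.
Qed.

Lemma Pmeasure_img (s : R) : (0 <= s)%R ->
  Defs.Pmeasure s A = 0 -> Defs.Pmeasure s (phi @` A) = 0.
Proof.
move=> s0 H0; apply/eqP; rewrite eq_le Pmeasure_ge0 andbT.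
apply/lee_addgt0Pr => e e0; rewrite add0e.
have c0 : (0 < K `^ s)%R by apply: powR_gt0.
have : Defs.Pmeasure s A < (e / K `^ s)%:E by rewrite H0 lte_fin divr_gt0.
move=> /ereal_inf_lt [_ [B cov <-] ylt].
apply: ge_ereal_inf; exists (\sum_(0 <= i <oo) Defs.P0 s (phi @` (B i `&` A))).
  exists (fun i => phi @` (B i `&` A)) => //.
  move=> _ [x Ax <-]; have [i _ Bix] := cov x Ax.
  by exists i => //; exists x.
apply: (@le_trans _ _ (\sum_(0 <= i <oo) ((K `^ s)%:E * Defs.P0 s (B i)))).
  apply: lee_nneseries => [i _ _|i _]; first exact: P0_ge0.
  exact: P0_img.
rewrite nneseriesZl; last by move=> i _; exact: P0_ge0.
apply: (@le_trans _ _ ((K `^ s)%:E * (e / K `^ s)%:E)).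
  by apply: lee_wpmul2l; [rewrite lee_fin ltW | exact: ltW].
by rewrite -EFinM mulrC divfK ?gt_eqF.
Qed.

Lemma pdim_img : Defs.packing_dim (phi @` A) <= Defs.packing_dim A.
Proof.
apply: ereal_inf_le_tmp => _ [s [s0 Hs] <-]; exists s => //; split => //.
exact: Pmeasure_img.
Qed.

End PTransfer.

Lemma inf_nat_cases (R : realType) (P : set nat) :
  ereal_inf [set ((k%:R : R)%:E) | k in P] = +oo%E \/
  exists2 r : R, ereal_inf [set ((k%:R : R)%:E) | k in P] = r%:E & (r = 0 \/ 1 <= r)%R.
Proof.
have lb0 : (0 <= ereal_inf [set ((k%:R : R)%:E) | k in P])%E.
  by apply: le_ereal_inf_tmp => _ [k _ <-]; rewrite lee_fin.
have [P0|nP0] := pselect (P 0%N).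
  right; exists 0%R; last by left.
  apply/eqP; rewrite eq_le lb0 andbT; apply: ereal_inf_lbound; by exists 0%N.
have [Pe|Pn] := pselect (P = set0).
  by left; rewrite Pe image_set0 ereal_inf0.
have /set0P [k Pk] : P != set0 by apply/eqP.
right.
have lb1 : (1 <= ereal_inf [set ((k%:R : R)%:E) | k in P])%E.
  apply: le_ereal_inf_tmp => _ [j Pj <-]; rewrite lee_fin ler1n lt0n.
  by apply/eqP => j0; apply: nP0; rewrite -j0.
have ub : (ereal_inf [set ((k%:R : R)%:E) | k in P] <= (k%:R : R)%:E)%E.
  by apply: ereal_inf_lbound; exists k.
move: lb1 ub; case E : (ereal_inf _) => [r||] //= r1 _.
by exists r => //; right; rewrite -lee_fin.
Qed.

Lemma covnum_cases (R : realType) (k : nat) (d : R) (X : set ('I_k -> R)) :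
  Defs.covnum d X = +oo%E \/
  exists2 r : R, Defs.covnum d X = r%:E & (r = 0 \/ 1 <= r)%R.
Proof. exact: inf_nat_cases. Qed.

Lemma ln_cov_ge0 (R : realType) (r : R) : (r = 0 \/ 1 <= r)%R -> (0 <= ln r)%R.
Proof. by case=> [->|r1]; [rewrite ln0 | exact: ln_ge0]. Qed.

Lemma ln_cov_le (R : realType) (r1 r2 : R) : (r1 = 0 \/ 1 <= r1)%R ->
  (r2 = 0 \/ 1 <= r2)%R -> (r1 <= r2)%R -> (ln r1 <= ln r2)%R.
Proof.
move=> [->|h1] h2 le12; first by rewrite ln0 //; exact: ln_cov_ge0.
have p1 : (0 < r1)%R by apply: lt_le_trans h1.
have p2 : (0 < r2)%R by apply: lt_le_trans le12.
by rewrite ler_ln ?posrE.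
Qed.

Lemma box_ratio_ge0 (R : realType) (k : nat) (d : R) (X : set ('I_k -> R)) :
  (0 < d < 1)%R -> (0 <= Defs.box_ratio d X)%E.
Proof.
move=> /andP[d0 d1]; rewrite /Defs.box_ratio.
case: (covnum_cases d X) => [->|[r -> hr]] //.
by rewrite lee_fin divr_ge0 ?ln_cov_ge0 // oppr_ge0 ltW // ln_lt0 // d0 d1.
Qed.

Section BTransfer.
Variables (R : realType) (n m : nat) (phi : ('I_n -> R) -> ('I_m -> R)).
Variables (A : set ('I_n -> R)) (L : R).
Hypothesis L1 : (1 <= L)%R.
Hypothesis Lip : forall x y, A x -> A y ->
  (Defs.edist (phi x) (phi y) <= L * Defs.edist x y)%R.

Let L0 : (0 < L)%R. Proof. by apply: lt_le_trans L1. Qed.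

Local Open Scope ereal_scope.

Lemma covnum_img (delta : R) :
  Defs.covnum (L * delta) (phi @` A) <= Defs.covnum delta A.
Proof.
apply: ereal_inf_le_tmp => _ [k [U [cov dU]] <-]; exists k => //.
exists (fun i => phi @` (U i `&` A)); split.
  move=> _ [x Ax <-]; have [i ik Uix] := cov x Ax.
  by exists i => //; exists x.
move=> i ik; apply: le_trans (diam_img L1 Lip (U i)) _.
by rewrite EFinM; apply: lee_wpmul2l; [rewrite lee_fin ltW|exact: dU].
Qed.

Lemma bdim_img : Defs.upper_box_dim (phi @` A) <= Defs.upper_box_dim A.
Proof.
have M0 : 0 <= Defs.upper_box_dim A.
  apply: le_ereal_inf_tmp => _ [e /andP[e0 e1] <-].
  have h2 : (0 < e / 2 < 1)%R by rewrite divr_gt0 //=; lra.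
  apply: le_trans (box_ratio_ge0 A h2) _.
  apply: ereal_sup_ubound; exists (e / 2)%R => //=.
  by rewrite divr_gt0 //=; lra.
move: M0; case EM : (Defs.upper_box_dim A) => [q0||] // q00; last by rewrite leey.
rewrite lee_fin in q00.
apply/lee_addgt0Pr => eps eps0.
pose q := (q0 + eps / 2)%R.
have : Defs.upper_box_dim A < q%:E by rewrite EM lte_fin /q; lra.
move=> /ereal_inf_lt [_ [e /andP[e0 e1] <-] supq].
have Gq : forall d, (0 < d < e)%R -> Defs.box_ratio d A <= q%:E.
  move=> d hd; apply: le_trans (ltW supq); apply: ereal_sup_ubound; by exists d.
pose T := (2 * q * ln L / eps)%R.
pose e' := Num.min e (expR (- T)).
have e'0 : (0 < e')%R by rewrite lt_min e0 expR_gt0.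
have e'e : (e' <= e)%R by rewrite ge_min lexx.
have e'T : (e' <= expR (- T))%R by rewrite ge_min lexx orbT.
have e'1 : (e' < 1)%R by apply: le_lt_trans e'e e1.
apply: (@le_trans _ _ (ereal_sup [set Defs.box_ratio d (phi @` A) |
                                    d in [set d | (0 < d < e')%R]])).
  by apply: ereal_inf_lbound; exists e' => //=; rewrite e'0 e'1.
apply: ge_ereal_sup => _ [d /andP[d0 de'] <-].
have dL0 : (0 < d / L)%R by rewrite divr_gt0.
have dLd : (d / L <= d)%R by rewrite ler_pdivrMr // ler_peMr // ltW.
have dLe : (0 < d / L < e)%R.
  by rewrite dL0 /=; apply: le_lt_trans dLd _; apply: lt_le_trans de' e'e.
have G := Gq _ dLe.
have C := covnum_img (d / L); rewrite mulrC divfK ?gt_eqF // in C.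
case: (covnum_cases (d / L) A) => [E2|[r2 E2 r2c]].
  by rewrite /Defs.box_ratio E2 in G.
case: (covnum_cases d (phi @` A)) => [E1|[r1 E1 r1c]].
  by rewrite E1 E2 in C.
rewrite /Defs.box_ratio E1 -EFinD lee_fin.
rewrite /Defs.box_ratio E2 lee_fin in G.
rewrite E1 E2 lee_fin in C.
have d1 : (d < 1)%R by apply: lt_trans de' e'1.
have t0 : (0 < - ln d)%R by rewrite oppr_gt0 ln_lt0 // d0 d1.
have lnL0 : (0 <= ln L)%R by apply: ln_ge0.
have lndL : ln (d / L) = (ln d - ln L)%R.
  by rewrite lnM ?posrE ?invr_gt0 // lnV ?posrE.
rewrite lndL in G.
have tL : (0 < - (ln d - ln L))%R by lra.
rewrite ler_pdivrMr // in G.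
have l12 := ln_cov_le r1c r2c C.
have tT : (T < - ln d)%R.
  have : (ln d < ln (expR (- T)))%R.
    by rewrite ltr_ln ?posrE ?expR_gt0 //; apply: lt_le_trans de' e'T.
  by rewrite expRK; lra.
have hT : (T * eps = 2 * q * ln L)%R by rewrite /T; field; rewrite gt_eqF.
have h : (T * eps <= (- ln d) * eps)%R by rewrite ler_wpM2r // ltW.
rewrite ler_pdivrMr //.
rewrite /q in G hT; lra.
Qed.

End BTransfer.

Lemma dims_eq (R : realType) (n m : nat) (X : set ('I_n -> R)) (Y : set ('I_m -> R))
  (f : ('I_n -> R) -> ('I_m -> R)) (g : ('I_m -> R) -> ('I_n -> R)) (Lf Lg : R) :
  (1 <= Lf)%R -> (1 <= Lg)%R ->
  (forall x y, X x -> X y -> (Defs.edist (f x) (f y) <= Lf * Defs.edist x y)%R) ->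
  (forall x y, Y x -> Y y -> (Defs.edist (g x) (g y) <= Lg * Defs.edist x y)%R) ->
  f @` X = Y -> g @` Y = X ->
  Defs.hausdorff_dim X = Defs.hausdorff_dim Y /\
  Defs.upper_box_dim X = Defs.upper_box_dim Y /\
  Defs.packing_dim X = Defs.packing_dim Y.
Proof.
move=> Lf1 Lg1 Lipf Lipg fX gY.
have h1 := hdim_img Lf1 Lipf; have h2 := hdim_img Lg1 Lipg.
have b1 := bdim_img Lf1 Lipf; have b2 := bdim_img Lg1 Lipg.
have p1 := pdim_img Lf1 Lipf; have p2 := pdim_img Lg1 Lipg.
rewrite fX in h1 b1 p1; rewrite gY in h2 b2 p2.
by split; [|split]; apply/eqP; rewrite eq_le; apply/andP; split.
Qed.

Section Concrete.
Variables (R : realType) (a b : R) (g h : R -> R) (L0 : R).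
Hypothesis hLip : forall x y, x \in `[a, b] -> y \in `[a, b] ->
  (`|h x - h y| <= L0 * `|x - y|)%R.

Let o20 : 'I_2 := @Ordinal 2 0 isT.
Let o21 : 'I_2 := @Ordinal 2 1 isT.
Let o30 : 'I_3 := @Ordinal 3 0 isT.
Let o31 : 'I_3 := @Ordinal 3 1 isT.
Let o32 : 'I_3 := @Ordinal 3 2 isT.

Lemma sum2 (F : 'I_2 -> R) : (\sum_i F i = F o20 + F o21)%R.
Proof.
rewrite !big_ord_recl big_ord0 addr0; congr (F _ + F _); exact: val_inj.
Qed.

Lemma sum3 (F : 'I_3 -> R) : (\sum_i F i = F o30 + F o31 + F o32)%R.
Proof.
rewrite !big_ord_recl big_ord0 addr0 addrA; congr (F _ + F _ + F _); exact: val_inj.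
Qed.

Definition p32 (v : 'I_3 -> R) : 'I_2 -> R := Defs.pt2 (v o30) (v o31).
Definition s32 (v : 'I_3 -> R) : 'I_2 -> R := Defs.pt2 (v o30) (v o31 + v o32).
Definition e23 (v : 'I_2 -> R) : 'I_3 -> R := Defs.pt3 (v o20) (v o21) (h (v o20)).
Definition t23 (v : 'I_2 -> R) : 'I_3 -> R :=
  Defs.pt3 (v o20) (v o21 - h (v o20)) (h (v o20)).

Let hLip' x y : x \in `[a, b] -> y \in `[a, b] ->
  (`|h x - h y| <= `|L0| * `|x - y|)%R.
Proof.
move=> hx hy; apply: le_trans (hLip hx hy) _.
by apply: ler_wpM2r => //; rewrite ler_norm.
Qed.

Lemma p32_lip u v : (Defs.edist (p32 u) (p32 v) <= 2 * Defs.edist u v)%R.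
Proof.
apply: le_trans (edist_le_sum _ _) _; rewrite sum2 /=.
have := coord_le_edist u v o30; have := coord_le_edist u v o31.
rewrite /p32 /Defs.pt2 /=; lra.
Qed.

Lemma s32_lip u v : (Defs.edist (s32 u) (s32 v) <= 3 * Defs.edist u v)%R.
Proof.
apply: le_trans (edist_le_sum _ _) _; rewrite sum2 /=.
have := coord_le_edist u v o30; have := coord_le_edist u v o31.
have := coord_le_edist u v o32.
have := ler_normD (u o31 - v o31) (u o32 - v o32).
rewrite /s32 /Defs.pt2 /=.
have -> : (u o31 + u o32 - (v o31 + v o32) = (u o31 - v o31) + (u o32 - v o32))%R.
  by rewrite opprD addrACA.
lra.
Qed.

Lemma e23_lip u v : Defs.graph2 a b g u -> Defs.graph2 a b g v ->
  (Defs.edist (e23 u) (e23 v) <= (2 + `|L0|) * Defs.edist u v)%R.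
Proof.
move=> [x hx <-] [y hy <-].
set U := Defs.pt2 x (g x); set V := Defs.pt2 y (g y).
apply: le_trans (edist_le_sum _ _) _; rewrite sum3 /=.
have c0 := coord_le_edist U V o20; have c1 := coord_le_edist U V o21.
have hl : (`|h x - h y| <= `|L0| * Defs.edist U V)%R.
  apply: le_trans (hLip' (x:=x) (y:=y) _ _) _; rewrite ?inE //.
  by apply: ler_wpM2l => //.
move: c0 c1 hl; rewrite /e23 /U /V /Defs.pt2 /Defs.pt3 /=; lra.
Qed.

Lemma t23_lip u v : Defs.graph2 a b (g \+ h) u -> Defs.graph2 a b (g \+ h) v ->
  (Defs.edist (t23 u) (t23 v) <= (2 + 2 * `|L0|) * Defs.edist u v)%R.
Proof.
move=> [x hx <-] [y hy <-].
set U := Defs.pt2 x ((g \+ h) x); set V := Defs.pt2 y ((g \+ h) y).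
apply: le_trans (edist_le_sum _ _) _; rewrite sum3 /=.
have c0 := coord_le_edist U V o20; have c1 := coord_le_edist U V o21.
have hl : (`|h x - h y| <= `|L0| * Defs.edist U V)%R.
  apply: le_trans (hLip' (x:=x) (y:=y) _ _) _; rewrite ?inE //.
  by apply: ler_wpM2l => //.
have := ler_normD ((g \+ h) x - (g \+ h) y) (- (h x - h y)).
rewrite normrN.
have -> : (((g \+ h) x - (g \+ h) y) + - (h x - h y) =
           ((g \+ h) x - h x) - ((g \+ h) y - h y))%R.
  by ring.
move: c0 c1 hl; rewrite /t23 /U /V /Defs.pt2 /Defs.pt3 /=; lra.
Qed.

Lemma img_p32 : p32 @` Defs.graph_vec a b g h = Defs.graph2 a b g.
Proof.
apply/seteqP; split => [_ [_ [x hx <-] <-]|_ [x hx <-]]; first by exists x.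
by exists (Defs.pt3 x (g x) (h x)); first by exists x.
Qed.

Lemma img_e23 : e23 @` Defs.graph2 a b g = Defs.graph_vec a b g h.
Proof.
apply/seteqP; split => [_ [_ [x hx <-] <-]|_ [x hx <-]]; first by exists x.
by exists (Defs.pt2 x (g x)); first by exists x.
Qed.

Lemma img_s32 : s32 @` Defs.graph_vec a b g h = Defs.graph2 a b (g \+ h).
Proof.
apply/seteqP; split => [_ [_ [x hx <-] <-]|_ [x hx <-]]; first by exists x.
by exists (Defs.pt3 x (g x) (h x)); first by exists x.
Qed.

Lemma img_t23 : t23 @` Defs.graph2 a b (g \+ h) = Defs.graph_vec a b g h.
Proof.
apply/seteqP; split => [_ [_ [x hx <-] <-]|_ [x hx <-]].
  by exists x => //; rewrite /t23 /Defs.pt2 /= addrK.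
exists (Defs.pt2 x ((g \+ h) x)); first by exists x.
by rewrite /t23 /Defs.pt2 /= addrK.
Qed.

End Concrete.

Theorem mainTheorem4 (R : realType) (a b : R) (g h : R -> R) :
  a < b ->
  {within `[a, b], continuous g} ->
  {within `[a, b], continuous h} ->
  (exists L : R, forall x y, x \in `[a, b] -> y \in `[a, b] ->
      `|h x - h y| <= L * `|x - y|) ->
  ((hausdorff_dim (graph_cplx a b g h) = hausdorff_dim (graph2 a b (g \+ h))) /\
   (hausdorff_dim (graph2 a b (g \+ h)) = hausdorff_dim (graph_vec a b g h)) /\
   (hausdorff_dim (graph_vec a b g h) = hausdorff_dim (graph2 a b g)) /\
   (upper_box_dim (graph_cplx a b g h) = upper_box_dim (graph2 a b (g \+ h))) /\
   (upper_box_dim (graph2 a b (g \+ h)) = upper_box_dim (graph_vec a b g h)) /\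
   (upper_box_dim (graph_vec a b g h) = upper_box_dim (graph2 a b g)) /\
   (packing_dim (graph_cplx a b g h) = packing_dim (graph2 a b (g \+ h))) /\
   (packing_dim (graph2 a b (g \+ h)) = packing_dim (graph_vec a b g h)) /\
   (packing_dim (graph_vec a b g h) = packing_dim (graph2 a b g))).
Proof.
move=> _ _ _ [L0 hLip].
have N0 : (0 <= `|L0| :> R) by [].
have c1 : (1 <= 2 + 2 * `|L0| :> R) by lra.
have c2 : (1 <= 3 :> R) by lra.
have c3 : (1 <= 2 :> R) by lra.
have c4 : (1 <= 2 + `|L0| :> R) by lra.
have [H1 [B1 P1]] := dims_eq c1 c2 (t23_lip hLip) (fun u v _ _ => s32_lip u v)
  (img_t23 a b g h) (img_s32 a b g h).
have [H2 [B2 P2]] := dims_eq c3 c4 (fun u v _ _ => p32_lip u v) (e23_lip hLip)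
  (img_p32 a b g h) (img_e23 a b g h).
have Ec : graph_cplx a b g h = graph_vec a b g h by [].
rewrite Ec H1 H2 B1 B2 P1 P2.
by do !split.
Qed.
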